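(* Let $H \le G$ be finite groups and let $[H,K]$ be the bottom interval of $[H,G]$. If $[H,K]$ is linearly primitive (i.e. there is an irreducible complex representation $U$ of $K$ with $K_{(U^H)} = H$), then $[H,G]$ is linearly primitive.
   Context: The interval $[H,G]$ is the lattice of subgroups $L$ with $H \le L \le G$ (meet = intersection, join = generated subgroup); its atoms are its minimal elements strictly above $H$, and its bottom interval is $[H,K]$ with $K$ the join of all atoms. For a group $L$ acting linearly on $V$, $M \le L$ and a subspace $X$: $V^M = \{v : mv = v \ \forall m \in M\}$ and $L_{(X)} = \{l \in L : lx = x \ \forall x \in X\}$. An interval $[H,G]$ of finite groups is linearly primitive if there is an irreducible complex representation $V$ of $G$ with $G_{(V^H)} = H$. *)

(* Defs.v *)
From HB Require Import structures.
From mathcomp Require Import all_boot all_order all_algebra all_fingroup all_solvable all_field all_character.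
Set Implicit Arguments. Unset Strict Implicit. Unset Printing Implicit Defensive.
Import GroupScope.

Definition is_atom (gT : finGroupType) (H G L : {group gT}) : bool :=
  [&& H \proper L, L \subset G &
      [forall M : {group gT}, ((H \proper M) && (M \subset L)) ==> (M == L)]].

(* The top K of the bottom interval [H, K]: the join of all atoms
   (equal to H when there is no atom, i.e. the empty join in [H,G]). *)
Definition bottom_top (gT : finGroupType) (H G : {group gT}) : {group gT} :=
  (<< H :|: \bigcup_(L : {group gT} | is_atom H G L) L >>)%G.

(* Here rfix_mx rG H is a
   matrix whose row space is V^H, and rstab rG U is the set of g in G fixing
   every row of U (hence every vector of the row space of U). *)
Definition linearly_primitive (gT : finGroupType) (H G : {group gT}) : Prop :=
  exists n (rG : mx_representation algC G n),
    mx_irreducible rG /\ rstab rG (rfix_mx rG H) = H.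

(* Main.v *)
Require Import Defs.
From mathcomp Require Import all_boot all_order all_algebra all_fingroup all_solvable all_field all_character.
Set Implicit Arguments. Unset Strict Implicit. Unset Printing Implicit Defensive.
Import GroupScope GRing.Theory Num.Theory.
Local Open Scope ring_scope.

Theorem lemma3p12 (gT : finGroupType) (H G : {group gT}) :
  H \subset G ->
  linearly_primitive H (bottom_top H G) ->
  linearly_primitive H G.
Proof.
move=> sHG [m [rU [irrU stabU]]].
set K := bottom_top H G in rU irrU stabU *.
have sKG : K \subset G.
  rewrite /K /bottom_top /= gen_subG subUset sHG /=.
  by apply/bigcupsP => L /and3P[].
have atomK : forall L : {group gT}, is_atom H G L -> L \subset K.
  move=> L aL; rewrite /K /bottom_top /=.
  have h1 : L \subset \bigcup_(L0 : {group gT} | is_atom H G L0) L0 := bigcup_sup L aL.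
  exact: subset_trans h1 (subset_trans (subsetUr H _) (sub_gen _)).
have irrpsi : cfRepr rU \in irr K by apply/irr_reprP; exists (Representation rU).
pose j := cfIirr (cfRepr rU).
have psiE : 'chi_j = cfRepr rU := cfIirrE irrpsi.
have : 'Ind[G] 'chi_j != 0 by rewrite cfInd_eq0 ?irr_char ?irr_neq0.
case/neq0_has_constt => i.
rewrite irr_consttE -Frobenius_reciprocity => ij.
have Nres : 'Res[K] 'chi[G]_i \is a character by rewrite cfRes_char ?irr_char.
have : j \in irr_constt ('Res[K] 'chi_i).
  by rewrite irr_consttE cfdotC conjC_eq0.
case/(constt_charP j Nres) => chi' Nchi' resE.
case/char_reprP: Nchi' => rT chi'E.
have /irr_reprP[[n rV] irrV chiE] := mem_irr i.
exists n, rV; split => //.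
pose rR := subg_repr rV sKG.
have : mx_rsim (dadd_grepr (Representation rU) rT) rR.
  apply/cfRepr_rsimP; rewrite cfRepr_dadd cfRepr_sub -chiE resE psiE chi'E //.
case=> B _ freeB defB.
have sHK : H \subset K.
  by rewrite /K /bottom_top /=; exact: subset_trans (subsetUl H _) (sub_gen _).
pose f := row_mx (1%:M : 'M_m) (0 : 'M_(m, rdegree rT)) *m B.
have homf : forall x, x \in K -> rU x *m f = f *m rV x.
  move=> x Kx; rewrite /f !mulmxA mul_mx_row mulmx1 mulmx0.
  rewrite -[row_mx (rU x) 0](_ : row_mx 1%:M 0 *m block_mx (rU x) 0 0 (rT x) = _); last first.
    by rewrite mul_row_block !mul1mx !mul0mx !addr0.
  rewrite -mulmxA; move: (defB x Kx) => /= ->; by rewrite mulmxA.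
have injf : forall p (W1 W2 : 'M_(p, m)), W1 *m f = W2 *m f -> W1 = W2.
  move=> p W1 W2; rewrite /f !mulmxA => /(row_free_inj freeB).
  by rewrite !mul_mx_row !mulmx1 !mulmx0 => /eq_row_mx[].
have sHM : H \subset rstab rV (rfix_mx rV H).
  by apply/subsetP => h Hh; rewrite inE (subsetP sHG) //= rfix_mx_id.
have sKMH : K :&: rstab rV (rfix_mx rV H) \subset H.
  apply/subsetP => x /setIP[Kx /setIdP[Gx fixx]].
  rewrite -stabU inE Kx /=.
  set W := rfix_mx rU H.
  have : (W *m f <= rfix_mx rV H)%MS.
    apply/rfix_mxP => h Hh.
    by rewrite -mulmxA -homf ?(subsetP sHK) // mulmxA rfix_mx_id.
  case/submxP => D WfE.
  apply/eqP/injf.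
  by rewrite -mulmxA homf // mulmxA WfE -mulmxA (eqP fixx).
apply/eqP; rewrite eqEsubset sHM andbT; apply/negPn/negP => nsub.
have pHM : H \proper rstab rV (rfix_mx rV H) by rewrite properE sHM nsub.
have [L minL sLM] := mingroup_exists (gP := fun M : {group gT} => H \proper M)
   (G := [group of rstab rV (rfix_mx rV H)]) pHM.
case/mingroupP: minL => pHL minLP.
have aL : is_atom H G L.
  rewrite /is_atom pHL (subset_trans sLM) ?rstab_sub //=.
  apply/forallP => M'; apply/implyP => /andP[pHM' sM'L].
  apply/eqP; apply: val_inj; exact: minLP.
have sLH : L \subset H.
  by apply: subset_trans sKMH; rewrite subsetI atomK // sLM.
by move: pHL; rewrite properE sLH andbF.
Qed.
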